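(* Let $N=\{1,\dots,n\}$, $\eta>0$, $B\ge1$ an integer. Let $(A(k))_{k\ge0}$ be $n\times n$ matrices, $x(0)\in\mathbb{R}^n$, and $x(k+1)=A(k)x(k)$. Assume: (i) each $A(k)$ is doubly stochastic with positive diagonal entries and all positive entries at least $\eta$; (ii) for every integer $k\ge0$, every permutation $\sigma$ of $N$ with $x_{\sigma(1)}(kB)\ge\cdots\ge x_{\sigma(n)}(kB)$, and every $d\in\{1,\dots,n-1\}$, either $x_{\sigma(d)}(kB)=x_{\sigma(d+1)}(kB)$, or there exist $t\in\{kB,\dots,(k+1)B-1\}$, $i\in\{\sigma(1),\dots,\sigma(d)\}$, $j\in\{\sigma(d+1),\dots,\sigma(n)\}$ with $(i,j)$ or $(j,i)$ in $\mathcal{E}(A(t))$. Then for every integer $k\ge0$ with $V(x(kB))>0$, \[\frac{V(x(kB))-V(x((k+1)B))}{V(x(kB))}\ge\frac{\eta}{2n^2}.\]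
   Context: A matrix is doubly stochastic if it is nonnegative with all row and column sums equal to $1$. For a matrix $A=[a_{ij}]$, $\mathcal{E}(A)$ is the set of directed edges $(j,i)$ (including self-edges) with $a_{ij}>0$. For $x\in\mathbb{R}^n$, $\bar x=\frac1n\sum_ix_i$ and $V(x)=\sum_i(x_i-\bar x)^2$. *)

(* Defs.v *)
From mathcomp Require Import all_boot all_order all_algebra all_fingroup.
Set Implicit Arguments. Unset Strict Implicit. Unset Printing Implicit Defensive.
Import Order.TTheory GRing.Theory Num.Theory.
Local Open Scope ring_scope.

(* Indices N = {1..n} are represented by 'I_n = {0..n-1}. *)

Definition doubly_stochastic (R : realFieldType) (n : nat) (A : 'M[R]_n) : Prop :=
  (forall i j, 0 <= A i j) /\
  (forall i, \sum_(j < n) A i j = 1) /\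
  (forall j, \sum_(i < n) A i j = 1).

Definition in_edges (R : realFieldType) (n : nat) (A : 'M[R]_n) (e : 'I_n * 'I_n) : Prop :=
  0 < A e.2 e.1.

Definition mean (R : realFieldType) (n : nat) (x : 'cV[R]_n) : R :=
  (\sum_(i < n) x i 0) / n%:R.

Definition Vdis (R : realFieldType) (n : nat) (x : 'cV[R]_n) : R :=
  \sum_(i < n) (x i 0 - mean x) ^+ 2.

(* Main.v *)
Require Import Defs.
From mathcomp Require Import all_boot all_order all_algebra all_fingroup.
From mathcomp Require Import ring lra zify.
Import Order.TTheory GRing.Theory Num.Theory.
Local Open Scope ring_scope.

Lemma exists_sorting (R : realFieldType) (n : nat) (f : 'I_n -> R) :
  exists sigma : 'S_n, forall p q : 'I_n, (p <= q)%N -> f (sigma q) <= f (sigma p).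
Proof.
set r := fun i j : 'I_n => f j <= f i.
have rtot : total r by move=> i j; rewrite /r le_total.
have rtr : transitive r by move=> i j k; rewrite /r => H1 H2; exact: le_trans H2 H1.
set s := sort r (enum 'I_n).
have pe : perm_eq s (ord_tuple n) by rewrite /s perm_sort val_ord_tuple.
case/tuple_permP: pe => sigma Hs.
exists sigma => p q pq.
have ss : sorted r s by apply: sort_sorted.
have sz : size s = n by rewrite Hs size_tuple.
have Hn : forall i : 'I_n, nth (sigma p) s i = sigma i.
  move=> i; rewrite Hs /= (nth_map i) ?size_enum_ord // nth_ord_enum.
  by rewrite (tnth_nth (sigma p)) /= nth_ord_enum.
have := sorted_leq_nth rtr (fun i => le_refl _) (sigma p) ss.
move=> /(_ p q); rewrite !inE sz !ltn_ord !Hn => /(_ isT isT pq).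
done.
Qed.


Lemma sum_mean (R : realFieldType) (n : nat) (x : 'cV[R]_n) :
  \sum_(i < n) x i 0 = mean x * n%:R.
Proof.
rewrite /mean; case: n => [|n] in x *; first by rewrite mulr0 big_ord0.
by rewrite divfK // pnatr_eq0.
Qed.

Lemma Vdis_alt (R : realFieldType) (n : nat) (x : 'cV[R]_n) :
  Vdis x = \sum_(i < n) x i 0 ^+ 2 - mean x ^+ 2 * n%:R.
Proof.
rewrite /Vdis.
have -> : \sum_(i < n) (x i 0 - mean x) ^+ 2 =
  \sum_(i < n) x i 0 ^+ 2 - 2 * mean x * \sum_(i < n) x i 0 + \sum_(i < n) mean x ^+ 2.
  rewrite mulr_sumr -sumrB -big_split /=; apply: eq_bigr => i _; ring.
by rewrite sum_mean sumr_const card_ord; ring.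
Qed.

Lemma mean_mul (R : realFieldType) (n : nat) (A : 'M[R]_n) (x : 'cV[R]_n) :
  doubly_stochastic A -> mean (A *m x) = mean x.
Proof.
move=> [_ [_ Hc]]; rewrite /mean; congr (_ / _).
under eq_bigr do rewrite mxE.
rewrite exchange_big /=; apply: eq_bigr => j _.
by rewrite -mulr_suml Hc mul1r.
Qed.

Lemma Vdis_step (R : realFieldType) (n : nat) (A : 'M[R]_n) (x : 'cV[R]_n) :
  doubly_stochastic A ->
  Vdis x - Vdis (A *m x) =
  \sum_(l < n) \sum_(c < n) A l c * (x c 0 - (A *m x) l 0) ^+ 2.
Proof.
move=> HA; rewrite !Vdis_alt mean_mul //.
case: HA => [_ [Hr Hc]].
have E : forall l : 'I_n, \sum_(c < n) A l c * (x c 0 - (A *m x) l 0) ^+ 2 =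
   \sum_(c < n) A l c * x c 0 ^+ 2 - (A *m x) l 0 ^+ 2.
  move=> l.
  have -> : \sum_(c < n) A l c * (x c 0 - (A *m x) l 0) ^+ 2 =
     \sum_(c < n) A l c * x c 0 ^+ 2 - 2 * (A *m x) l 0 * \sum_(c < n) (A l c * x c 0)
     + (A *m x) l 0 ^+ 2 * \sum_(c < n) A l c.
    rewrite !mulr_sumr -sumrB -big_split /=; apply: eq_bigr => i _; ring.
  rewrite Hr mulr1.
  have -> : \sum_(c < n) A l c * x c 0 = (A *m x) l 0 by rewrite mxE.
  ring.
rewrite (eq_bigr _ (fun l _ => E l)) sumrB exchange_big /=.
have -> : \sum_(j < n) \sum_(i < n) A i j * x j 0 ^+ 2 = \sum_(j < n) x j 0 ^+ 2.
  by apply: eq_bigr => j _; rewrite -mulr_suml Hc mul1r.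
ring.
Qed.


Lemma sq_sum_le (R : realFieldType) (N : nat) (f : nat -> R) :
  (forall d, 0 <= f d) ->
  \sum_(0 <= d < N) f d ^+ 2 <= (\sum_(0 <= d < N) f d) ^+ 2.
Proof.
move=> H; elim: N => [|N IH]; first by rewrite !big_geq // expr0n.
rewrite !big_nat_recr //=.
have h1 : 0 <= \sum_(0 <= d < N) f d by apply: sumr_ge0 => i _.
have h2 := H N.
nra.
Qed.

Lemma noninc (R : realFieldType) (z : nat -> R) :
  (forall m, z m.+1 <= z m) -> forall m p, (m <= p)%N -> z p <= z m.
Proof.
move=> Hz m p /subnKC <-; elim: (p - m)%N => [|k IH]; first by rewrite addn0.
by rewrite addnS; apply: le_trans (Hz _) IH.
Qed.

Lemma chain (R : realFieldType) (z : nat -> R) (T : pred nat) (hi : nat) :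
  (forall m, z m.+1 <= z m) ->
  (exists d, (d < hi)%N /\ T d) ->
  exists d0 d1, [/\ T d0, T d1, (d0 <= d1)%N, (d1 < hi)%N &
    \sum_(0 <= d < hi) (if T d then z d - z d.+1 else 0) <= z d0 - z d1.+1].
Proof.
move=> Hz; elim: hi => [|hi IH]; first by case=> d [].
case=> d [dh Td].
rewrite big_nat_recr //=.
case: (boolP [exists e : 'I_hi, T e]) => [/existsP [e Te] | /existsPn Hne].
  have [d0 [d1 [T0 T1 d01 d1h Hs]]] :=
    IH (ex_intro _ (nat_of_ord e) (conj (ltn_ord e) Te)).
  case: (boolP (T hi)) => Thi.
    exists d0, hi; split => //; first by apply: leq_trans d01 (ltnW d1h).
    have := @noninc _ z Hz _ _ d1h; lra.
  by exists d0, d1; split => //; [apply: ltnW | rewrite addr0].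
have H0 : \sum_(0 <= d < hi) (if T d then z d - z d.+1 else 0) = 0.
  rewrite big1_seq // => i; rewrite mem_index_iota => /andP [_ ih].
  by rewrite (negbTE (Hne (Ordinal ih))).
have Thi : T hi.
  move: dh; rewrite ltnS leq_eqVlt => /orP [/eqP <- //|dh].
  by have := Hne (Ordinal dh); rewrite Td.
exists hi, hi; split => //; rewrite H0 Thi add0r //.
Qed.

Lemma pick2 (R : realFieldType) (n : nat) (F : 'I_n -> R) (l j : 'I_n) :
  (forall i, 0 <= F i) -> j != l -> F l + F j <= \sum_i F i.
Proof.
move=> H jl; rewrite (bigD1 l) //= (bigD1 j) //= addrA lerDl.
by apply: sumr_ge0 => i _.
Qed.

Lemma pick3 (R : realFieldType) (n : nat) (F : 'I_n -> R) (l j k : 'I_n) :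
  (forall i, 0 <= F i) -> j != l -> k != l -> k != j ->
  F l + F j + F k <= \sum_i F i.
Proof.
move=> H jl kl kj; rewrite (bigD1 l) //= (bigD1 j) //= (bigD1 k) /=; last by rewrite kl kj.
rewrite !addrA lerDl.
by apply: sumr_ge0 => i _.
Qed.

Section Row.
Variables (R : realFieldType) (n N : nat) (eta y : R) (a v : 'I_n -> R) (l : 'I_n)
  (idx : 'I_n -> nat) (z : nat -> R) (S : pred nat).
Hypotheses (Heta : 0 < eta) (Ha0 : forall i, 0 <= a i) (Hl : eta <= a l)
  (Hae : forall i, 0 < a i -> eta <= a i) (Hz : forall m, z m.+1 <= z m)
  (HS : forall d, S d ->
     (exists j, 0 < a j /\ ((idx j <= d < idx l) || (idx l <= d < idx j))%N) /\
     (forall i, (idx i <= d)%N -> z d <= v i) /\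
     (forall i, (d < idx i)%N -> v i <= z d.+1)).

Let g d := z d - z d.+1.
Let Tu := fun d => S d && (d < idx l)%N.
Let Td := fun d => S d && (idx l <= d)%N.

Lemma g_ge0 d : 0 <= z d - z d.+1.
Proof. by rewrite subr_ge0. Qed.

Lemma sum0 (T : pred nat) : ~ (exists d, (d < N)%N /\ T d) ->
  \sum_(0 <= d < N) (if T d then z d - z d.+1 else 0) = 0.
Proof.
move=> Hn; rewrite big1_seq // => i; rewrite mem_index_iota => /andP [_ ih].
by case: ifP => // Ti; case: Hn; exists i.
Qed.

Lemma sumT_ge0 (T : pred nat) :
  0 <= \sum_(0 <= d < N) (if T d then z d - z d.+1 else 0).
Proof. by apply: sumr_ge0 => i _; case: ifP => // _; apply: g_ge0. Qed.

Lemma up_wit : (exists d, (d < N)%N /\ Tu d) ->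
  exists j, [/\ 0 < a j, (idx j < idx l)%N &
    \sum_(0 <= d < N) (if Tu d then z d - z d.+1 else 0) <= v j - v l].
Proof.
move=> Hex; have [d0 [d1 [T0 T1 d01 _ Hs]]] := @chain _ z _ _ Hz Hex.
move: T0 T1; rewrite /Tu => /andP [S0 l0] /andP [S1 l1].
have [[j [aj cj]] [H2 _]] := HS d0 S0.
have [_ [_ H3]] := HS d1 S1.
have jd : (idx j <= d0)%N.
  by case/orP: cj => /andP [] // ld0 _; move: (leq_ltn_trans ld0 l0); rewrite ltnn.
exists j; split => //; first by apply: leq_ltn_trans jd l0.
have := H2 j jd; have := H3 l l1; lra.
Qed.

Lemma dn_wit : (exists d, (d < N)%N /\ Td d) ->
  exists j, [/\ 0 < a j, (idx l < idx j)%N &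
    \sum_(0 <= d < N) (if Td d then z d - z d.+1 else 0) <= v l - v j].
Proof.
move=> Hex; have [d0 [d1 [T0 T1 d01 _ Hs]]] := @chain _ z _ _ Hz Hex.
move: T0 T1; rewrite /Td => /andP [S0 l0] /andP [S1 l1].
have [_ [H2 _]] := HS d0 S0.
have [[j [aj cj]] [_ H3]] := HS d1 S1.
have jd : (d1 < idx j)%N.
  by case/orP: cj => /andP [] // _ ld0; move: (leq_ltn_trans l1 ld0); rewrite ltnn.
exists j; split => //; first by apply: leq_ltn_trans l1 jd.
have := H2 l l0; have := H3 j jd; lra.
Qed.

Lemma row_bound :
  eta / 2 * \sum_(0 <= d < N) (if S d then z d - z d.+1 else 0) ^+ 2
  <= \sum_i a i * (v i - y) ^+ 2.
Proof.
have Hsplit : \sum_(0 <= d < N) (if S d then z d - z d.+1 else 0) ^+ 2 =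
  \sum_(0 <= d < N) (if Tu d then z d - z d.+1 else 0) ^+ 2 +
  \sum_(0 <= d < N) (if Td d then z d - z d.+1 else 0) ^+ 2.
  rewrite -big_split /=; apply: eq_bigr => d _; rewrite /Tu /Td.
  case: (S d) => /=; last by rewrite expr0n /= addr0.
  by case: ltnP => _; rewrite expr0n /= ?addr0 ?add0r.
have sq T : \sum_(0 <= d < N) (if T d then z d - z d.+1 else 0) ^+ 2 <=
    (\sum_(0 <= d < N) (if T d then z d - z d.+1 else 0)) ^+ 2.
  apply: (@sq_sum_le R N (fun d => if T d then z d - z d.+1 else 0)).
  by move=> d; case: ifP => // _; apply: g_ge0.
have Fge0 : forall i, 0 <= a i * (v i - y) ^+ 2.
  by move=> i; apply: mulr_ge0 => //; apply: sqr_ge0.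
have sq2 : forall u p : R, p ^+ 2 / 2 <= u ^+ 2 + (u + p) ^+ 2.
  move=> u p; have := sqr_ge0 (2 * u + p); lra.
rewrite Hsplit.
set SU := \sum_(0 <= d < N) (if Tu d then _ else _) ^+ 2.
set SD := \sum_(0 <= d < N) (if Td d then _ else _) ^+ 2.
have sU := sq Tu; have sD := sq Td; rewrite -/SU -/SD in sU sD.
have pU := sumT_ge0 Tu; have pD := sumT_ge0 Td.
set PU := \sum_(0 <= d < N) (if Tu d then z d - z d.+1 else 0) in sU pU.
set PD := \sum_(0 <= d < N) (if Td d then z d - z d.+1 else 0) in sD pD.
have ptl := Fge0 l.
have e0 : 0 <= SU by apply: sumr_ge0 => *; apply: sqr_ge0.
have e1 : 0 <= SD by apply: sumr_ge0 => *; apply: sqr_ge0.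
have dec (T : pred nat) : (exists d, (d < N)%N /\ T d) \/ ~ (exists d, (d < N)%N /\ T d).
  case: (boolP [exists d : 'I_N, T d]) => [/existsP [d Hd] | /existsPn Hn].
    by left; exists d; split.
  by right; case=> d [dN Hd]; have := Hn (Ordinal dN); rewrite Hd.
have Ex i : eta * (v i - y) ^+ 2 <= a i * (v i - y) ^+ 2 ->
   eta * (v i - y) ^+ 2 <= a i * (v i - y) ^+ 2 by [].
have El : eta * (v l - y) ^+ 2 <= a l * (v l - y) ^+ 2 by apply: ler_wpM2r => //; apply: sqr_ge0.
case: (dec Tu) => HU; case: (dec Td) => HD.
- have [j [aj jl Hj]] := up_wit HU; rewrite -/PU in Hj.
  have [k [ak lk Hk]] := dn_wit HD; rewrite -/PD in Hk.
  have jl' : j != l by apply/eqP => E; move: jl; rewrite E ltnn.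
  have kl' : k != l by apply/eqP => E; move: lk; rewrite E ltnn.
  have kj' : k != j by apply/eqP => E; move: (ltn_trans jl lk); rewrite E ltnn.
  have P3 := pick3 _ _ _ _ _ _ Fge0 jl' kl' kj'.
  have Ej : eta * (v j - y) ^+ 2 <= a j * (v j - y) ^+ 2.
    exact: (ler_wpM2r (sqr_ge0 _) (Hae _ aj)).
  have Ek : eta * (v k - y) ^+ 2 <= a k * (v k - y) ^+ 2.
    exact: (ler_wpM2r (sqr_ge0 _) (Hae _ ak)).
  have Hp : PU ^+ 2 <= (v j - v l) ^+ 2 by nra.
  have Hq : PD ^+ 2 <= (v l - v k) ^+ 2 by nra.
  have key : ((v j - v l) ^+ 2 + (v l - v k) ^+ 2) / 2 <=
      (v l - y) ^+ 2 + (v j - y) ^+ 2 + (v k - y) ^+ 2.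
    have h1 := sqr_ge0 (3 * (v l - y) + (v j - v l) - (v l - v k)).
    have h2 : 0 <= (v j - v l) * (v l - v k) by apply: mulr_ge0; lra.
    nra.
  set W := (v l - y) ^+ 2 + (v j - y) ^+ 2 + (v k - y) ^+ 2 in key.
  have h3 : SU + SD <= 2 * W by lra.
  have h4 : eta / 2 * (SU + SD) <= eta / 2 * (2 * W) by apply: ler_wpM2l; [have := Heta; lra | exact: h3].
  have h5 : eta / 2 * (2 * W) = eta * (v l - y) ^+ 2 + eta * (v j - y) ^+ 2 + eta * (v k - y) ^+ 2.
    by rewrite /W; field.
  lra.
- have [j [aj jl Hj]] := up_wit HU; rewrite -/PU in Hj.
  have jl' : j != l by apply/eqP => E; move: jl; rewrite E ltnn.
  have P2 := pick2 _ _ _ _ _ Fge0 jl'.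
  have Ej : eta * (v j - y) ^+ 2 <= a j * (v j - y) ^+ 2.
    exact: (ler_wpM2r (sqr_ge0 _) (Hae _ aj)).
  have Hp : PU ^+ 2 <= (v j - v l) ^+ 2 by nra.
  have PD0 : PD = 0 by apply: sum0.
  have key := sq2 (v l - y) (v j - v l).
  have eE0 : v l - y + (v j - v l) = v j - y by ring.
  rewrite eE0 in key.
  set W := (v l - y) ^+ 2 + (v j - y) ^+ 2 in key.
  have h3 : SU + SD <= 2 * W by rewrite PD0 expr0n /= in sD; lra.
  have h4 : eta / 2 * (SU + SD) <= eta / 2 * (2 * W) by apply: ler_wpM2l; [have := Heta; lra | exact: h3].
  have h5 : eta / 2 * (2 * W) = eta * (v l - y) ^+ 2 + eta * (v j - y) ^+ 2.
    by rewrite /W; field.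
  lra.
- have [k [ak lk Hk]] := dn_wit HD; rewrite -/PD in Hk.
  have kl' : k != l by apply/eqP => E; move: lk; rewrite E ltnn.
  have P2 := pick2 _ _ _ _ _ Fge0 kl'.
  have Ek : eta * (v k - y) ^+ 2 <= a k * (v k - y) ^+ 2.
    exact: (ler_wpM2r (sqr_ge0 _) (Hae _ ak)).
  have Hq : PD ^+ 2 <= (v l - v k) ^+ 2 by nra.
  have PU0 : PU = 0 by apply: sum0.
  have key := sq2 (v l - y) (v k - v l).
  have eE1 : v l - y + (v k - v l) = v k - y by ring.
  rewrite eE1 in key.
  have eE2 : (v k - v l) ^+ 2 = (v l - v k) ^+ 2 by ring.
  rewrite eE2 in key.
  set W := (v l - y) ^+ 2 + (v k - y) ^+ 2 in key.
  have h3 : SU + SD <= 2 * W by rewrite PU0 expr0n /= in sU; lra.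
  have h4 : eta / 2 * (SU + SD) <= eta / 2 * (2 * W) by apply: ler_wpM2l; [have := Heta; lra | exact: h3].
  have h5 : eta / 2 * (2 * W) = eta * (v l - y) ^+ 2 + eta * (v k - y) ^+ 2.
    by rewrite /W; field.
  lra.
- have PU0 : PU = 0 by apply: sum0.
  have PD0 : PD = 0 by apply: sum0.
  rewrite PU0 expr0n /= in sU; rewrite PD0 expr0n /= in sD.
  have -> : SU + SD = 0 by lra.
  rewrite mulr0; by apply: sumr_ge0.
Qed.
End Row.


Definition cutopp n (idx : 'I_n -> nat) (l j : 'I_n) (d : nat) : bool :=
  ((idx j <= d < idx l) || (idx l <= d < idx j))%N.
Arguments cutopp {n}.

Definition cross_row (R : realFieldType) n (idx : 'I_n -> nat) (A : 'M[R]_n) (l : 'I_n) d :=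
  [exists j : 'I_n, (0 < A l j) && cutopp idx l j d].
Arguments cross_row {R n}.

Definition cross (R : realFieldType) n (idx : 'I_n -> nat) (A : 'M[R]_n) d :=
  [exists l : 'I_n, cross_row idx A l d].
Arguments cross {R n}.

Lemma inv_step (R : realFieldType) n (A : 'M[R]_n) (w : 'cV[R]_n) (idx : 'I_n -> nat) d
   (c1 c2 : R) :
  (forall i j, 0 <= A i j) -> (forall i, \sum_(j < n) A i j = 1) ->
  ~~ cross idx A d ->
  (forall r, (idx r <= d)%N -> c1 <= w r 0) /\ (forall r, (d < idx r)%N -> w r 0 <= c2) ->
  (forall r, (idx r <= d)%N -> c1 <= (A *m w) r 0) /\
  (forall r, (d < idx r)%N -> (A *m w) r 0 <= c2).
Proof.
move=> H0 H1 Hc [Hu Hd].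
have nc r j : 0 < A r j -> ~~ cutopp idx r j d.
  move=> pos; apply/negP => op; move/negP: Hc; apply; apply/existsP; exists r.
  by apply/existsP; exists j; rewrite pos.
split=> r Hr; rewrite mxE.
- have -> : c1 = \sum_(j < n) A r j * c1 by rewrite -mulr_suml H1 mul1r.
  apply: ler_sum => j _; have := H0 r j; rewrite le_eqVlt => /orP [/eqP <-|pos].
    by rewrite !mul0r.
  apply: ler_wpM2l; first exact: ltW.
  apply: Hu; have := nc _ _ pos; rewrite /cutopp Hr /= negb_or => /andP [_].
  by rewrite -leqNgt.
- have -> : c2 = \sum_(j < n) A r j * c2 by rewrite -mulr_suml H1 mul1r.
  apply: ler_sum => j _; have := H0 r j; rewrite le_eqVlt => /orP [/eqP <-|pos].
    by rewrite !mul0r.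
  apply: ler_wpM2l; first exact: ltW.
  apply: Hd; have := nc _ _ pos; rewrite /cutopp Hr andbT negb_or => /andP [H _].
  by move: H; rewrite -ltnNge.
Qed.

Lemma pick1 (R : realFieldType) (n : nat) (F : 'I_n -> R) (l : 'I_n) :
  (forall i, 0 <= F i) -> F l <= \sum_i F i.
Proof.
move=> H; rewrite (bigD1 l) //= lerDl.
by apply: sumr_ge0 => i _.
Qed.

Lemma cs_sum (R : realFieldType) (N : nat) (f : nat -> R) :
  (\sum_(0 <= d < N) f d) ^+ 2 <= N%:R * \sum_(0 <= d < N) f d ^+ 2.
Proof.
set S := \sum_(0 <= d < N) f d; set Q := \sum_(0 <= d < N) f d ^+ 2.
have inner d : \sum_(0 <= e < N) (f d - f e) ^+ 2 = f d ^+ 2 *+ N - 2 * f d * S + Q.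
  transitivity (\sum_(0 <= e < N) (f d ^+ 2 - 2 * f d * f e + f e ^+ 2)).
    by apply: eq_bigr => e _; ring.
  by rewrite big_split /= sumrB sumr_const_nat subn0 -mulr_sumr.
have E : \sum_(0 <= d < N) \sum_(0 <= e < N) (f d - f e) ^+ 2 =
   2 * (Q *+ N) - 2 * S ^+ 2.
  rewrite (eq_bigr _ (fun d _ => inner d)) big_split /= sumrB sumr_const_nat subn0.
  rewrite -sumrMnl -mulr_suml -mulr_sumr -/S; move: (\sum_(0 <= i < N) f i ^+ 2) => q; ring.
have : 0 <= \sum_(0 <= d < N) \sum_(0 <= e < N) (f d - f e) ^+ 2.
  by apply: sumr_ge0 => d _; apply: sumr_ge0 => e _; apply: sqr_ge0.
rewrite E mulr_natl; lra.
Qed.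


Theorem lemma5 (R : realFieldType) (n : nat) (eta : R) (B : nat)
  (A : nat -> 'M[R]_n) (x : nat -> 'cV[R]_n) :
  0 < eta -> (1 <= B)%N ->
  (forall k, x k.+1 = A k *m x k) ->
  (forall k, doubly_stochastic (A k)) ->
  (forall k i, 0 < A k i i) ->
  (forall k i j, 0 < A k i j -> eta <= A k i j) ->
  (forall (k : nat) (sigma : 'S_n),
     (forall p q : 'I_n, (p <= q)%N -> x (k * B)%N (sigma q) 0 <= x (k * B)%N (sigma p) 0) ->
     forall d : 'I_n, forall d1 : 'I_n, val d1 = (val d).+1 ->
       x (k * B)%N (sigma d) 0 = x (k * B)%N (sigma d1) 0
       \/ exists (t : nat) (p q : 'I_n),
            [/\ (k * B <= t)%N, (t < k.+1 * B)%N, (p <= d)%N, (d < q)%N &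
                in_edges (A t) (sigma p, sigma q) \/ in_edges (A t) (sigma q, sigma p)]) ->
  forall k : nat, 0 < Vdis (x (k * B)%N) ->
    eta / (2 * (n%:R) ^+ 2) <=
      (Vdis (x (k * B)%N) - Vdis (x (k.+1 * B)%N)) / Vdis (x (k * B)%N).
Proof.
move=> Heta HB Hx HA Hdiag Heta' Hcut k HV.
case: n A x Hx HA Hdiag Heta' Hcut HV => [|n'] A x Hx HA Hdiag Heta' Hcut HV.
  by move: HV; rewrite /Vdis big_ord0 ltxx.
set T0 := (k * B)%N.
have [s Hs] := @exists_sorting R n'.+1 (fun i => x T0 i 0).
set idx := fun i : 'I_n'.+1 => nat_of_ord ((s^-1)%g i).
set z := fun p => x T0 (s (inord (minn p n'))) 0.
have idxs p : idx (s p) = p by rewrite /idx permK.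
have sidx r : s (inord (idx r)) = r.
  by rewrite /idx inord_val permKV.
have idxle r : (idx r <= n')%N by rewrite /idx -ltnS ltn_ord.
have Hz m : z m.+1 <= z m.
  rewrite /z; apply: (Hs (inord (minn m n')) (inord (minn m.+1 n'))).
  rewrite !inordK; lia.
have zle r p : (idx r <= p)%N -> z p <= x T0 r 0.
  move=> Hp; have Hi := idxle r; rewrite /z -{1}(sidx r); apply: Hs; rewrite !inordK; lia.
have zge r p : (p <= idx r)%N -> x T0 r 0 <= z p.
  move=> Hp; have Hi := idxle r.
  rewrite /z -{1}(sidx r); apply: Hs; rewrite !inordK; lia.
have oppE (l j : 'I_n'.+1) (d : nat) : cutopp idx l j d = ((idx j <= d < idx l) || (idx l <= d < idx j))%N by [].
set cr := fun (i : nat) d => cross idx (A (T0 + i)%N) d.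
have inv i d : (forall i', (i' < i)%N -> ~~ cr i' d) ->
    (forall r, (idx r <= d)%N -> z d <= x (T0 + i)%N r 0) /\
    (forall r, (d < idx r)%N -> x (T0 + i)%N r 0 <= z d.+1).
  elim: i => [_|i IH Hi].
    by rewrite addn0; split=> r Hr; [apply: zle | apply: zge].
  rewrite addnS Hx; case: (HA (T0 + i)%N) => [H0 [H1 _]].
  apply: inv_step => //; first exact: (Hi i (ltnSn i)).
  by apply: IH => i' Hi'; apply: Hi; apply: ltnW.
set Sset := fun (i : nat) (l : 'I_n'.+1) d =>
  cross_row idx (A (T0 + i)%N) l d && [forall i' : 'I_B, (i' < i)%N ==> ~~ cr i' d].
have rowb (i : nat) (l : 'I_n'.+1) : (i < B)%N ->
  eta / 2 * \sum_(0 <= d < n') (if Sset i l d then z d - z d.+1 else 0) ^+ 2 <=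
  \sum_c A (T0 + i)%N l c * (x (T0 + i)%N c 0 - (A (T0 + i)%N *m x (T0 + i)%N) l 0) ^+ 2.
  move=> iB; case: (HA (T0 + i)%N) => [H0 [H1 _]].
  apply: (@row_bound R n'.+1 n' eta _ (A (T0 + i)%N l) (fun c => x (T0 + i)%N c 0) l idx z).
  - exact: Heta.
  - by move=> j; apply: H0.
  - exact: Heta' (Hdiag _ _).
  - by move=> j; apply: Heta'.
  - exact: Hz.
  move=> d /andP [Hc /forallP Hf]; split.
    by move/existsP: Hc => [j /andP [Hj Ho]]; exists j; split.
  apply: (inv i d) => i' Hi'.
  have iB' : (i' < B)%N by apply: ltn_trans Hi' iB.
  by have := Hf (Ordinal iB'); rewrite /= Hi'.
have tel : Vdis (x T0) - Vdis (x (k.+1 * B)%N) =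
  \sum_(i < B) \sum_l \sum_c A (T0 + i)%N l c *
     (x (T0 + i)%N c 0 - (A (T0 + i)%N *m x (T0 + i)%N) l 0) ^+ 2.
  have -> : (k.+1 * B = T0 + B)%N by rewrite mulSn addnC.
  transitivity (\sum_(i < B) (Vdis (x (T0 + i)%N) - Vdis (x (T0 + i.+1)%N))).
    rewrite -(big_mkord xpredT (fun i => Vdis (x (T0 + i)%N) - Vdis (x (T0 + i.+1)%N))).
    rewrite (@telescope_sumr_eq R 0 B (fun i => - Vdis (x (T0 + i)%N))) //.
      by rewrite addn0; ring.
    by move=> i _; ring.
  apply: eq_bigr => i _; rewrite addnS Hx; apply: Vdis_step; apply: HA.
have perd d : (d < n')%N -> (z d - z d.+1) ^+ 2 <=
    \sum_(i < B) \sum_l (if Sset i l d then z d - z d.+1 else 0) ^+ 2.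
  move=> dn.
  case: (eqVneq (z d) (z d.+1)) => [E|NE].
    rewrite E subrr expr0n /=.
    by apply: sumr_ge0 => i _; apply: sumr_ge0 => l _; apply: sqr_ge0.
  have m1 : minn d n' = d by lia.
  have m2 : minn d.+1 n' = d.+1 by lia.
  have dn1 : (d < n'.+1)%N by lia.
  have dn2 : (d.+1 < n'.+1)%N by lia.
  have Hv : val (inord d.+1 : 'I_n'.+1) = (val (inord d : 'I_n'.+1)).+1 by rewrite /= !inordK.
  case: (Hcut k s Hs (inord d) (inord d.+1) Hv) => [Eq | [t [p [q [t1 t2 pd dq He]]]]].
    by move: NE; rewrite /z m1 m2 -/T0 Eq eqxx.
  rewrite inordK // in pd dq.
  have tB : (t < T0 + B)%N by move: t2; rewrite mulSn addnC.
  set i := (t - T0)%N.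
  have iB : (i < B)%N by rewrite /i; lia.
  have ti : (T0 + i)%N = t by rewrite /i; lia.
  have cri : cr i d.
    rewrite /cr /cross ti; apply/existsP; case: He => He.
      exists (s q); apply/existsP; exists (s p).
      by move: He; rewrite /in_edges /= => He; rewrite He oppE !idxs pd dq.
    exists (s p); apply/existsP; exists (s q).
    by move: He; rewrite /in_edges /= => He; rewrite He oppE !idxs pd dq orbT.
  have exP : exists m, (m < B)%N && cr m d by exists i; rewrite iB cri.
  case: (ex_minnP exP) => i0 /andP [i0B cr0] Hmin.
  move: cr0; rewrite /cr /cross => /existsP [l0 Hl0].
  have S0 : Sset i0 l0 d.
    rewrite /Sset Hl0 /=; apply/forallP => i'; apply/implyP => Hi'; apply/negP => C.
    by have := Hmin i' (introT andP (conj (ltn_ord i') C)); rewrite leqNgt Hi'.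
  have h1 : (z d - z d.+1) ^+ 2 = (if Sset i0 l0 d then z d - z d.+1 else 0) ^+ 2.
    by rewrite S0.
  rewrite h1.
  apply: (le_trans (pick1 _ _ (fun l => (if Sset i0 l d then z d - z d.+1 else 0) ^+ 2) l0
     (fun _ => sqr_ge0 _))).
  apply: (pick1 _ _ (fun i : 'I_B => \sum_l (if Sset i l d then z d - z d.+1 else 0) ^+ 2)
     (Ordinal i0B)).
  by move=> j; apply: sumr_ge0 => l _; apply: sqr_ge0.
have lb : eta / 2 * \sum_(0 <= d < n') (z d - z d.+1) ^+ 2 <=
    Vdis (x T0) - Vdis (x (k.+1 * B)%N).
  rewrite tel.
  apply: (@le_trans _ _ (eta / 2 * \sum_(i < B) \sum_l \sum_(0 <= d < n')
     (if Sset i l d then z d - z d.+1 else 0) ^+ 2)).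
    apply: ler_wpM2l; first by have := Heta; lra.
    rewrite (eq_bigr (fun i : 'I_B => \sum_(0 <= d < n') \sum_l
       (if Sset i l d then z d - z d.+1 else 0) ^+ 2)); last first.
      by move=> i _; rewrite exchange_big.
    rewrite exchange_big /=; apply: ler_sum_nat => d /andP [_ dn].
    exact: perd.
  rewrite mulr_sumr; apply: ler_sum => i _; rewrite mulr_sumr; apply: ler_sum => l _.
  exact: rowb.
set G := \sum_(0 <= d < n') (z d - z d.+1) ^+ 2 in lb.
have telz : \sum_(0 <= d < n') (z d - z d.+1) = z 0 - z n'.
  rewrite (@telescope_sumr_eq R 0 n' (fun d => - z d)) //; first by ring.
  by move=> *; ring.
have cs := cs_sum _ n' (fun d => z d - z d.+1).
rewrite telz -/G in cs.
have xlo r : z n' <= x T0 r 0 by apply: zle.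
have xhi r : x T0 r 0 <= z 0 by apply: zge.
have Npos : 0 < n'.+1%:R :> R by rewrite ltr0n.
have mhi : mean (x T0) <= z 0.
  rewrite /mean ler_pdivrMr //.
  apply: (@le_trans _ _ (\sum_(r < n'.+1) z 0)); first by apply: ler_sum => r _.
  by rewrite sumr_const card_ord mulr_natr.
have mlo : z n' <= mean (x T0).
  rewrite /mean ler_pdivlMr //.
  apply: (@le_trans _ _ (\sum_(r < n'.+1) z n')); last by apply: ler_sum => r _.
  by rewrite sumr_const card_ord mulr_natr.
have Vb : Vdis (x T0) <= n'.+1%:R * (z 0 - z n') ^+ 2.
  rewrite /Vdis.
  apply: (@le_trans _ _ (\sum_(r < n'.+1) (z 0 - z n') ^+ 2)).
    apply: ler_sum => r _; have := xlo r; have := xhi r; nra.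
  by rewrite sumr_const card_ord mulr_natl.
have Gge0 : 0 <= G by apply: sumr_ge0 => d _; apply: sqr_ge0.
have nn : n'%:R <= n'.+1%:R :> R by rewrite ler_nat.
have VG : Vdis (x T0) <= n'.+1%:R ^+ 2 * G.
  have h : n'.+1%:R * (z 0 - z n') ^+ 2 <= n'.+1%:R * (n'%:R * G).
    by apply: ler_wpM2l; [apply: ltW | exact: cs].
  have h2 : n'%:R * G <= n'.+1%:R * G by apply: ler_wpM2r.
  have h3 : n'.+1%:R * (n'%:R * G) <= n'.+1%:R * (n'.+1%:R * G).
    by apply: ler_wpM2l; [apply: ltW | exact: h2].
  rewrite expr2 -mulrA; lra.
rewrite -/T0 in HV *.
rewrite ler_pdivlMr //.
have c0 : 0 <= eta / (2 * n'.+1%:R ^+ 2).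
  apply: divr_ge0; [exact: ltW | by apply: mulr_ge0 => //; apply: sqr_ge0].
have h := ler_wpM2l c0 VG.
have e : eta / (2 * n'.+1%:R ^+ 2) * (n'.+1%:R ^+ 2 * G) = eta / 2 * G.
  by field; rewrite addrC natr1 pnatr_eq0.
by apply: le_trans h _; rewrite e.
Qed.
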